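(* Let $\mathbb{K}\in\{\mathbb{R},\mathbb{C}\}$, let $\mathcal{X}$ be a separable topological $\mathbb{K}$-vector space whose topological dual $\mathcal{X}^{\ast}$ separates the points of $\mathcal{X}$, and let $\mathcal{U}$ be a $0$-neighborhood in $\mathcal{X}$. Then every net $(U_j)_{j\in J}\subseteq\mathbf{CU}_{\mathcal{U}}(\mathcal{X}^{\ast})$ that converges in the weak*-Hausdorff hypertopology converges to $U_\infty=\mathrm{Li}_{j\in J}U_j=\mathrm{Ls}_{j\in J}U_j\in\mathbf{CU}_{\mathcal{U}}(\mathcal{X}^{\ast})$.
   Context: Topological vector spaces are Hausdorff. $\mathcal{X}^{\ast}$ carries the weak* topology. $\mathcal{U}^{\circ}=\{\sigma\in\mathcal{X}^{\ast}:|\sigma(A)|\le1\ \forall A\in\mathcal{U}\}$; $\mathbf{CU}_{\mathcal{U}}(\mathcal{X}^{\ast})$ is the set of nonempty convex weak*-closed subsets of $\mathcal{U}^{\circ}$. The weak*-Hausdorff hypertopology is generated by the extended pseudometrics $d_H^{(A)}(F,\tilde F)=\max\{\sup_{\sigma\in F}\inf_{\tilde\sigma\in\tilde F}|(\sigma-\tilde\sigma)(A)|,\ \sup_{\tilde\sigma\in\tilde F}\inf_{\sigma\in F}|(\sigma-\tilde\sigma)(A)|\}$, $A\in\mathcal{X}$. For a net $(F_j)_{j\in J}$ of subsets of $\mathcal{X}^{\ast}$: $\mathrm{Li}_{j\in J}F_j$ is the set of weak* limits of nets $(\sigma_j)_{j\in J}$ with $\sigma_j\in F_j$ for all $j\succ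 j_0$ for some $j_0$; $\mathrm{Ls}_{j\in J}F_j$ is the set of weak* limits of nets $(\sigma_i)_{i\in I}$ with $\sigma_i\in F_{s(i)}$ for some subnet $(F_{s(i)})_{i\in I}$. *)

(* Defs.v *)
From HB Require Import structures.
From mathcomp Require Import all_boot all_order all_algebra.
From mathcomp Require Import all_classical all_reals all_analysis.
From mathcomp.real_closed Require Import complex.

Set Implicit Arguments.
Unset Strict Implicit.
Unset Printing Implicit Defensive.

Import Order.TTheory GRing.Theory Num.Theory.
Import numFieldTopology.Exports.

Local Open Scope classical_set_scope.
Local Open Scope ring_scope.

Definition directed_by (J : Type) (le : J -> J -> Prop) : Prop :=
  [/\ exists j : J, True,
      (forall j, le j j),
      (forall i j k, le i j -> le j k -> le i k) &
      (forall i j, exists k, le i k /\ le j k)].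

(** The filter of "eventually" (tails) of a directed set. A net
    [x : J -> T] converges to [t] iff [x @ eventually_in le --> t]. *)
Definition eventually_in (J : Type) (le : J -> J -> Prop) : set_system J :=
  [set P | exists j0, forall j, le j0 j -> P j].

(** [s : I -> J] defines a subnet (in the sense of Willard):
    for every [j0] the net [s] is eventually above [j0]. *)
Definition subnet_map (I J : Type) (leI : I -> I -> Prop) (leJ : J -> J -> Prop)
  (s : I -> J) : Prop :=
  forall j0, exists i0, forall i, leI i0 i -> leJ j0 (s i).

Section Dual.
Variables (K : numFieldType) (X : topologicalLmodType K).

Definition dual : set (X -> K) :=
  [set s | (forall (a : K) (x y : X), s (a *: x + y) = a * s x + s y)
           /\ continuous s].

Definition wstar_lim (I : Type) (leI : I -> I -> Prop) (s : I -> X -> K)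
  (t : X -> K) : Prop :=
  dual t /\ {ptws, s @ eventually_in leI --> t}.

Definition wstar_closed (F : set (X -> K)) : Prop :=
  F `<=` dual /\
  exists C : set {ptws X -> K}, closed C /\ F = C `&` dual.

Definition polar (U : set X) : set (X -> K) :=
  [set s | dual s /\ forall A, U A -> `|s A| <= 1].

Definition convex_fun_set (F : set (X -> K)) : Prop :=
  forall s t (l : K), F s -> F t -> 0 <= l <= 1 ->
    F (fun A => l * s A + (1 - l) * t A).

Definition CU (U : set X) : set (set (X -> K)) :=
  [set F | [/\ F !=set0, convex_fun_set F, wstar_closed F & F `<=` polar U]].

(** [hdist_le A F G e] means  d_H^(A)(F, G) <= e, i.e.
    sup_{s in F} inf_{t in G} |(s - t)(A)| <= e and symmetrically,
    with sup and inf written out (inf <= e iff for every e' > e some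
    element is < e'; sup <= e iff every element is <= e). *)
Definition hdist_le (A : X) (F G : set (X -> K)) (e : K) : Prop :=
  (forall s, F s -> forall e', e < e' -> exists2 t, G t & `|(s - t) A| < e') /\
  (forall t, G t -> forall e', e < e' -> exists2 s, F s & `|(s - t) A| < e').

(** Convergence of a net of subsets of X^star to [F] in the weakstar-Hausdorff
    hypertopology, i.e. the topology generated by the extended
    pseudometrics d_H^(A), A in X: d_H^(A)(F_j, F) -> 0 for every A. *)
Definition wH_lim (J : Type) (le : J -> J -> Prop) (Fs : J -> set (X -> K))
  (F : set (X -> K)) : Prop :=
  forall (A : X) (e : K), 0 < e -> eventually_in le (fun j => hdist_le A (Fs j) F e).

Definition Li (J : Type) (le : J -> J -> Prop) (Fs : J -> set (X -> K)) :
  set (X -> K) :=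
  [set t | exists s : J -> X -> K,
     eventually_in le (fun j => Fs j (s j)) /\ wstar_lim le s t].

Definition Ls (J : Type) (le : J -> J -> Prop) (Fs : J -> set (X -> K)) :
  set (X -> K) :=
  [set t | exists (I : Type) (leI : I -> I -> Prop) (sub : I -> J)
                  (s : I -> X -> K),
     [/\ directed_by leI, subnet_map leI le sub,
         (forall i, Fs (sub i) (s i)) & wstar_lim leI s t]].

End Dual.

(* Main.v *)
Require Import Defs.
From HB Require Import structures.
From mathcomp Require Import all_boot all_order all_algebra.
From mathcomp Require Import all_classical all_reals all_analysis.
From mathcomp.real_closed Require Import complex.
From mathcomp Require Import ring lra.

Set Implicit Arguments.
Unset Strict Implicit.
Unset Printing Implicit Defensive.

Import Order.TTheory GRing.Theory Num.Theory.
Import numFieldTopology.Exports.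
Import numFieldNormedType.Exports.

Local Open Scope classical_set_scope.
Local Open Scope ring_scope.
Section Core.
Variables (R : realType) (K : numFieldType).
Variable emb : R -> K.
Hypothesis embD : forall a b, emb (a + b) = emb a + emb b.
Hypothesis embM : forall a b, emb (a * b) = emb a * emb b.
Hypothesis emb1 : emb 1 = 1.
Hypothesis emb_le : forall a b, (emb a <= emb b) = (a <= b).
Hypothesis emb_lt : forall a b, (emb a < emb b) = (a < b).
Variable nK : K -> R.
Hypothesis normK : forall z, `|z| = emb (nK z).
Hypothesis pos_emb : forall e : K, 0 < e -> exists r, e = emb r.
Variables (re : K -> R) (cj : K -> K).
Hypothesis reD : forall x y, re (x + y) = re x + re y.
Hypothesis re_le : forall z, re z <= nK z.
Hypothesis nK_cj : forall z, nK (cj z) = nK z.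
Hypothesis sqrD : forall x y,
  nK (x + y) ^+ 2 = nK x ^+ 2 + 2 * re (cj x * y) + nK y ^+ 2.
Hypothesis re_emb : forall l x y, re (cj x * (emb l * y)) = l * re (cj x * y).
Hypothesis re_sq : forall x, re (cj x * x) = nK x ^+ 2.
Hypothesis net : forall d : R, 0 < d -> exists G : seq K,
  forall z, nK z <= 1 -> exists2 g, g \in G & nK (z - g) < d.

Lemma emb0 : emb 0 = 0.
Proof. by have := embD 0 0; rewrite addr0 => h; apply: (addrI (emb 0)); rewrite -h addr0. Qed.

Lemma embN a : emb (- a) = - emb a.
Proof. by apply/eqP; rewrite -subr_eq0 opprK -embD addNr emb0. Qed.

Lemma emb_inj : injective emb.
Proof. by move=> a b e; apply/le_anti; rewrite -!emb_le e lexx. Qed.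

Lemma nK_ge0 z : 0 <= nK z.
Proof. by rewrite -emb_le emb0 -normK. Qed.

Lemma nKM x y : nK (x * y) = nK x * nK y.
Proof. by apply: emb_inj; rewrite embM -!normK normrM. Qed.

Lemma nKD x y : nK (x + y) <= nK x + nK y.
Proof. by rewrite -emb_le embD -!normK ler_normD. Qed.

Lemma nKN x : nK (- x) = nK x.
Proof. by apply: emb_inj; rewrite -!normK normrN. Qed.

Lemma nK0 : nK 0 = 0.
Proof. by apply: emb_inj; rewrite -normK normr0 emb0. Qed.

Lemma nKB x y : nK (x - y) = nK (y - x).
Proof. by rewrite -nKN opprB. Qed.

Lemma nK_emb r : nK (emb r) = `|r|.
Proof.
apply: emb_inj; rewrite -normK.
have [r0|r0] := leP 0 r.
  by rewrite ger0_norm ?ger0_norm // -emb0 emb_le.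
rewrite ltr0_norm ?ltr0_norm // ?embN // -emb0 emb_lt //.
Qed.

Lemma nK_sum n (F : 'I_n -> K) : nK (\sum_(k < n) F k) <= \sum_(k < n) nK (F k).
Proof.
apply: (big_ind2 (fun x y => nK x <= y)); first by rewrite nK0.
  by move=> x1 y1 x2 y2 h1 h2; apply: le_trans (nKD _ _) _; apply: lerD.
by [].
Qed.

Lemma re0 : re 0 = 0.
Proof. by have := reD 0 0; rewrite addr0 => h; apply: (addrI (re 0)); rewrite -h addr0. Qed.

Lemma re_sum n (F : 'I_n -> K) : re (\sum_(k < n) F k) = \sum_(k < n) re (F k).
Proof. exact: (big_morph re reD re0). Qed.

Fixpoint combos (G : seq K) (n : nat) : seq (seq K) :=
  if n is n'.+1 then [seq g :: l | g <- G, l <- combos G n'] else [:: [::]].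

Lemma combos_ex G n (f : nat -> K) : (forall k, (k < n)%N -> f k \in G) ->
  exists2 l, l \in combos G n & forall k, (k < n)%N -> nth 0 l k = f k.
Proof.
elim: n f => [|n IH] f Hf; first by exists [::].
have [l Hl Hlf] := IH (fun k => f k.+1) (fun k hk => Hf k.+1 hk).
exists (f 0%N :: l); first by apply: allpairs_f => //; apply: Hf.
by case=> [|k] //= hk; apply: Hlf.
Qed.

Lemma sum_ge_term n (F : 'I_n -> R) i : (forall j, 0 <= F j) -> F i <= \sum_j F j.
Proof. by move=> h; rewrite (bigD1 i) //= lerDl sumr_ge0. Qed.


Lemma core (n : nat) (M eps : R) : 0 <= M -> 0 < eps ->
  exists2 eta : R, 0 < eta & exists Ws : seq (seq K),
  forall (T : Type) (C : set T) (V : T -> nat -> K),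
    C !=set0 ->
    (forall c c' l, C c -> C c' -> 0 <= l <= 1 -> exists2 c'', C c'' &
       forall k, (k < n)%N -> V c'' k = V c k + emb l * (V c' k - V c k)) ->
    (forall c k, C c -> (k < n)%N -> nK (V c k) <= M) ->
    (forall ws, ws \in Ws -> exists2 c, C c &
       nK (\sum_(k < n) nth 0 ws k * V c k) < eta) ->
    exists2 c, C c & forall k, (k < n)%N -> nK (V c k) < eps.
Proof.
move=> M0 eps0.
set e2 := eps ^+ 2.
have e20 : 0 < e2 by rewrite exprn_gt0.
set S := n.+1%:R * M + 1.
have S0 : 0 < S by rewrite /S; apply: ltr_wpDl => //; apply: mulr_ge0.
have MS : M <= S.
  by rewrite /S -natr1 mulrDl mul1r; have := mulr_ge0 (ler0n R n) M0; lra.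
set B0 := 4 * n%:R * M ^+ 2 + 1.
have B00 : 0 < B0 by rewrite /B0 ltr_wpDl // !mulr_ge0.
set lam := e2 / (4 * B0 + e2).
have lam0 : 0 < lam by rewrite divr_gt0 // addr_gt0 // mulr_gt0.
have lamB : lam * (4 * B0 + e2) = e2 by rewrite mulfVK // gt_eqF // addr_gt0 // mulr_gt0.
have lam1 : lam <= 1.
  rewrite ler_pdivrMr ?mul1r ?lerDr ?addr_gt0 ?mulr_gt0 //.
  by rewrite mulr_ge0 // ltW.
set del := lam * e2 / 2.
have del0 : 0 < del by rewrite divr_gt0 // mulr_gt0.
set nM := n%:R * M + 1.
have nM0 : 0 < nM by rewrite ltr_wpDl // mulr_ge0.
set dp := e2 / (4 * S * nM).
have dp0 : 0 < dp by rewrite divr_gt0 // !mulr_gt0.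
have [G HG] := net dp0.
exists (e2 / (4 * S)); first by rewrite divr_gt0 // mulr_gt0.
exists (combos G n).
move=> T C V [c1 Cc1] Hcomb Hbd Hws.
apply: contrapT => Hno.
pose Q c := \sum_(k < n) nK (V c k) ^+ 2.
have Q0 c : 0 <= Q c by apply: sumr_ge0 => k _; exact: exprn_ge0 (nK_ge0 _).
have Hq c : C c -> e2 <= Q c.
  move=> Cc; rewrite leNgt; apply/negP => hQ; apply: Hno; exists c => // k kn.
  have h := @sum_ge_term n (fun k : 'I_n => nK (V c k) ^+ 2) (Ordinal kn) (fun j => exprn_ge0 2 (nK_ge0 _)).
  have h2 : nK (V c k) ^+ 2 < e2 by apply: le_lt_trans hQ.
  have := nK_ge0 (V c k); rewrite /e2 in h2; nra.
pose E := [set Q c | c in C].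
have hinf : has_inf E.
  split; first by exists (Q c1); exists c1.
  by exists 0 => _ [c _ <-].
have [_ [c0 Cc0 <-] Hq0] := inf_adherent del0 hinf.
have Hinf c : C c -> inf E <= Q c.
  by move=> Cc; apply: (ge_inf hinf.2); exists c.
pose a := V c0.
pose w k := cj (a k) * emb S^-1.
have Hw k : (k < n)%N -> nK (w k) <= 1.
  move=> kn; rewrite /w nKM nK_cj nK_emb ger0_norm; last by rewrite invr_ge0 ltW.
  rewrite ler_pdivrMr // mul1r; apply: le_trans MS; exact: Hbd.
have : forall k, exists g, (k < n)%N -> g \in G /\ nK (w k - g) < dp.
  move=> k; case: (ltnP k n) => kn; last by exists 0.
  by have [g Gg Hg] := HG _ (Hw k kn); exists g.
move=> /choice [gf Hgf].
have [ws Hws1 Hws2] := combos_ex (f := gf) (fun k kn => (Hgf k kn).1).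
have [c' Cc' Hc'] := Hws ws Hws1.
have {}Hc' : nK (\sum_(k < n) gf k * V c' k) < e2 / (4 * S).
  suff -> : \sum_(k < n) gf k * V c' k = \sum_(k < n) nth 0 ws k * V c' k by [].
  by apply: eq_bigr => k _; rewrite Hws2.
pose b k := V c' k - a k.
have Hb k : (k < n)%N -> nK (b k) <= 2 * M.
  move=> kn; apply: le_trans (nKD _ _) _; rewrite nKN -[2]/(1+1) mulrDl mul1r.
  by apply: lerD; apply: Hbd.
have lamI : 0 <= lam <= 1 by rewrite (ltW lam0) lam1.
have [c'' Cc'' Hc''] := Hcomb c0 c' lam Cc0 Cc' lamI.
pose P := \sum_(k < n) re (cj (a k) * b k).
pose Qb := \sum_(k < n) nK (b k) ^+ 2.
have HQ'' : Q c'' = Q c0 + 2 * lam * P + lam ^+ 2 * Qb.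
  rewrite /Q /P /Qb.
  rewrite (eq_bigr (fun k : 'I_n => nK (a k) ^+ 2 + 2 * lam * re (cj (a k) * b k)
     + lam ^+ 2 * nK (b k) ^+ 2)); last first.
    move=> k _; rewrite Hc'' // sqrD re_emb nKM nK_emb ger0_norm; last exact: ltW.
    by rewrite /b /a; ring.
  by rewrite !big_split /= -!mulr_sumr.
have F3 : Qb <= 4 * n%:R * M ^+ 2.
  have : Qb <= \sum_(k < n) (2 * M) ^+ 2.
    apply: ler_sum => k _; have h := Hb k (ltn_ord k); have := nK_ge0 (b k); nra.
  by rewrite sumr_const card_ord -mulr_natr => h; apply: le_trans h _; rewrite le_eqVlt; apply/orP; left; apply/eqP; ring.
have F2 : Q c0 - del < Q c''.
  by have := Hinf c'' Cc''; lra.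
have F1 := Hq c0 Cc0.
pose Z := \sum_(k < n) cj (a k) * V c' k.
have HZ : re Z = P + Q c0.
  rewrite /Z re_sum /P /Q -big_split; apply: eq_bigr => k _ /=.
  by rewrite -re_sq -reD -mulrDr /b subrK.
have F4 : P + Q c0 <= nK Z by rewrite -HZ.
have HW : \sum_(k < n) w k * V c' k = emb S^-1 * Z.
  by rewrite /Z mulr_sumr; apply: eq_bigr => k _; rewrite /w; ring.
have F5 : nK (\sum_(k < n) w k * V c' k) * S = nK Z.
  rewrite HW nKM nK_emb ger0_norm; last by rewrite invr_ge0 ltW.
  by rewrite mulrC mulrA mulfV ?mul1r // gt_eqF.
have F6 : nK (\sum_(k < n) w k * V c' k - \sum_(k < n) gf k * V c' k) <= n%:R * M * dp.
  rewrite -sumrB; apply: le_trans (nK_sum _) _.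
  have : \sum_(k < n) nK (w k * V c' k - gf k * V c' k) <= \sum_(k < n) dp * M.
    apply: ler_sum => k _; rewrite -mulrBl nKM; apply: ler_pM => //; try exact: nK_ge0.
      exact/ltW/(Hgf k (ltn_ord k)).2.
    exact: Hbd.
  by rewrite sumr_const card_ord -mulr_natr => h; apply: le_trans h _; rewrite le_eqVlt; apply/orP; left; apply/eqP; ring.
have F7 := nKD (\sum_(k < n) w k * V c' k - \sum_(k < n) gf k * V c' k) (\sum_(k < n) gf k * V c' k).
rewrite subrK in F7.
set dW := nK (\sum_(k < n) w k * V c' k) in F5 F7.
set dd := nK (_ - _) in F6 F7.
set dG := nK (\sum_(k < n) gf k * V c' k) in F7 Hc'.
have G1 : - (e2 / 2) < 2 * P + lam * Qb.
  have : lam * (- (e2 / 2)) < lam * (2 * P + lam * Qb).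
    move: F2; rewrite HQ'' /del; lra.
  by rewrite ltr_pM2l.
have G2 : lam * Qb <= e2 / 4.
  have : lam * Qb <= lam * (B0 - 1) by rewrite ler_pM2l // /B0 addrK.
  have : lam * e2 >= 0 by rewrite mulr_ge0 // ltW.
  move: lamB; rewrite /B0; lra.
have G3 : dd * S <= e2 / 4.
  have h1 : dd * S <= n%:R * M * dp * S by rewrite ler_pM2r.
  have h2 : n%:R * M * dp <= nM * dp by rewrite ler_pM2r // /nM lerDl.
  have h3 : nM * dp * S = e2 / 4.
    by rewrite /dp; field; rewrite ?gt_eqF //.
  apply: le_trans h1 _; rewrite -h3 ler_pM2r //.
have G4 : dG * S < e2 / 4.
  have h3 : e2 / (4 * S) * S = e2 / 4 by field; rewrite gt_eqF.
  by rewrite -h3 ltr_pM2r.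
have G5 : dW * S <= dd * S + dG * S by rewrite -mulrDl ler_pM2r.
lra.
Qed.

Variable X : topologicalLmodType K.

Section DualFacts.
Variable s : X -> K.
Hypothesis ds : dual s.

Lemma dual_lin a x y : s (a *: x + y) = a * s x + s y.
Proof. exact: ds.1. Qed.

Lemma dual0 : s 0 = 0.
Proof.
have := dual_lin 1 0 0; rewrite scale1r addr0 mul1r => h.
by apply: (addrI (s 0)); rewrite -h addr0.
Qed.

Lemma dualZ a x : s (a *: x) = a * s x.
Proof. by have := dual_lin a x 0; rewrite !addr0 dual0 addr0. Qed.

Lemma dualD x y : s (x + y) = s x + s y.
Proof. by have := dual_lin 1 x y; rewrite scale1r mul1r. Qed.

Lemma dual_sum n (F : 'I_n -> X) : s (\sum_(k < n) F k) = \sum_(k < n) s (F k).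
Proof. exact: (big_morph s dualD dual0). Qed.

Lemma dualB x y : s (x - y) = s x - s y.
Proof. by rewrite -scaleN1r dualD dualZ mulN1r. Qed.

End DualFacts.

Lemma KLa (As : seq X) (t : X -> K) (M eps : R) : dual t -> 0 <= M -> 0 < eps ->
  exists2 eta, 0 < eta & exists Bs : seq X, forall C : set (X -> K),
   C !=set0 -> convex_fun_set C -> C `<=` @dual _ X ->
   (forall c A, C c -> A \in As -> nK (c A - t A) <= M) ->
   (forall B, B \in Bs -> exists2 c, C c & nK (c B - t B) < eta) ->
   exists2 c, C c & forall A, A \in As -> nK (c A - t A) < eps.
Proof.
move=> dt M0 eps0.
have [eta eta0 [Ws HW]] := core (size As) M0 eps0.
exists eta => //.
exists [seq \sum_(k < size As) nth 0 ws k *: nth 0 As k | ws <- Ws].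
move=> C C0 Cconv Cdual Cbd HB.
pose V (c : X -> K) k := c (nth 0 As k) - t (nth 0 As k).
have H1 : forall c c' l, C c -> C c' -> 0 <= l <= 1 -> exists2 c'', C c'' &
       forall k, (k < size As)%N -> V c'' k = V c k + emb l * (V c' k - V c k).
  move=> c c' l Cc Cc' /andP[l0 l1].
  exists (fun A => emb l * c' A + (1 - emb l) * c A).
    apply: Cconv => //; apply/andP; split; first by rewrite -emb0 emb_le.
    by rewrite -emb1 emb_le.
  by move=> k _; rewrite /V; ring.
have H2 : forall c k, C c -> (k < size As)%N -> nK (V c k) <= M.
  by move=> c k Cc kn; apply: Cbd => //; apply: mem_nth.
have H3 : forall ws, ws \in Ws -> exists2 c, C c &
       nK (\sum_(k < size As) nth 0 ws k * V c k) < eta.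
  move=> ws wsW.
  have [c Cc Hc] := HB _ (map_f (fun ws => \sum_(k < size As) nth 0 ws k *: nth 0 As k) wsW).
  exists c => //.
  rewrite dual_sum ?dual_sum // in Hc; last exact: Cdual.
  rewrite -sumrB in Hc.
  suff -> : \sum_(k < size As) nth 0 ws k * V c k = \sum_(i < size As)
      (c (ws`_i *: As`_i) - t (ws`_i *: As`_i)) by [].
  apply: eq_bigr => k _; rewrite /V dualZ ?dualZ //; last exact: Cdual.
  by ring.
have [c Cc Hc] := HW (X -> K) C V C0 H1 H2 H3.
exists c => // A /(nthP 0) [k kn <-]; exact: Hc.
Qed.

Lemma scale_cont_r (A : X) : (fun r : K^o => r *: A) @ (0 : K^o) --> (0 : K^o) *: A.
Proof.
apply: (@continuous_comp _ _ _ (fun r : K^o => (r, A)) (fun z : K^o * X => z.1 *: z.2)).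
  have := @cvg_pair _ _ _ (nbhs (0:K^o)) (nbhs (0:K^o)) (nbhs A) _ _ _ id (fun _ => A) cvg_id (cvg_cst A).
  exact.
exact: scale_continuous.
Qed.

Lemma polar_bound (U : set X) : nbhs 0 U -> forall A,
  exists2 M, 0 <= M & forall s, polar U s -> nK (s A) <= M.
Proof.
move=> U0 A.
have := @scale_cont_r A; rewrite scale0r => /(_ _ U0).
move=> /= /nbhs_norm0P [r r0 Hr].
have [r' er'] : exists r', r = emb r'.
  exact: pos_emb.
have r'0 : 0 < r' by rewrite -emb_lt -er' emb0.
exists (2 / r'); first by rewrite divr_ge0 // ltW.
move=> s [ds Hs].
have hU : U (emb (r' / 2) *: A).
  have r2 : 0 <= r' / 2 by rewrite divr_ge0 // ltW.
  apply: Hr => /=; rewrite normK nK_emb er' emb_lt ger0_norm //.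
  by rewrite ltr_pdivrMr // ltr_pMr // ltr1n.
have r2 : 0 <= r' / 2 by rewrite divr_ge0 // ltW.
have := Hs _ hU; rewrite dualZ // normK -emb1 emb_le nKM nK_emb ger0_norm //.
move=> h; rewrite ler_pdivlMr //; lra.
Qed.

Lemma ev_filter (I : Type) (leI : I -> I -> Prop) :
  directed_by leI -> Filter (eventually_in leI).
Proof.
move=> [[i0 _] lrefl ltrans ldir]; constructor.
- by exists i0.
- move=> P Q [j1 H1] [j2 H2]; have [k [k1 k2]] := ldir j1 j2.
  by exists k => j kj; split; [apply: H1; apply: ltrans kj|apply: H2; apply: ltrans kj].
- by move=> P Q PQ [j H]; exists j => i /H /PQ.
Qed.

Lemma ev_ex (I : Type) (leI : I -> I -> Prop) (P : I -> Prop) :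
  directed_by leI -> eventually_in leI P -> exists i, P i.
Proof. by move=> [_ lrefl _ _] [j H]; exists j; apply: H. Qed.

Lemma ev_all (I : Type) (leI : I -> I -> Prop) (T : eqType) (P : T -> I -> Prop) (l : seq T) :
  directed_by leI -> (forall x, x \in l -> eventually_in leI (P x)) ->
  eventually_in leI (fun i => forall x, x \in l -> P x i).
Proof.
move=> Idir; have FF := ev_filter Idir.
elim: l => [|y l IH] H.
  by apply: filterS filterT => i _ x.
have h1 := H y (mem_head _ _).
have h2 := IH (fun x xl => H x (mem_behead (s := y :: l) xl)).
apply: filterS2 h1 h2 => i h1 h2 x; rewrite in_cons => /orP[/eqP->|xl] //.
exact: h2.
Qed.

Lemma closedL (G : set (X -> K)) (t : X -> K) (I : Type) (Bf : I -> set (X -> K)) :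
  wstar_closed G -> dual t -> (exists i : I, True) ->
  (forall i j, exists k, Bf k `<=` Bf i `&` Bf j) ->
  (forall i, Bf i !=set0) -> (forall i, Bf i `<=` G) ->
  (forall x eps, 0 < eps -> exists i, forall s, Bf i s -> nK (s x - t x) < eps) ->
  G t.
Proof.
move=> [GD [Cl [clC GE]]] dt [i0 _] Bdir Bne BG Bcv.
have FF : Filter (filter_from setT Bf) := filter_fromT_filter (ex_intro (fun _ => True) i0 Logic.I) Bdir.
have PF : ProperFilter (filter_from setT Bf) := filter_from_proper FF (fun i _ => Bne i).
have hcv : {ptws, filter_from setT Bf --> t}.
  apply/(pointwise_cvgP _ FF) => x P /nbhs_normP [e e0 He].
  have [e' ee'] := pos_emb e0.
  have e'0 : 0 < e' by rewrite -emb_lt -ee' emb0.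
  have [i Hi] := Bcv x e' e'0.
  exists i => // s /= Bs; apply: He => /=.
  by rewrite normK ee' emb_lt nKB; apply: Hi.
have : Cl t.
  apply: (@closed_cvg (X -> K) {ptws X -> K} (filter_from setT Bf) PF id Cl clC) => //.
  exists i0 => // s /BG. rewrite GE. by case.
by rewrite GE.
Qed.

Lemma equi (U : set X) (e : nat -> X) : nbhs 0 U -> dense (range e) ->
  forall (x : X) (eps : R), 0 < eps -> exists N : nat, forall n, (N <= n)%N ->
  forall s t, polar U s -> polar U t ->
  (forall k, (k < n)%N -> nK (s (e k) - t (e k)) < n.+1%:R^-1) ->
  nK (s x - t x) < eps.
Proof.
move=> U0 De x eps eps0.
set rho := eps / 3.
have rho0 : 0 < rho by rewrite divr_gt0.
have h1 : (fun y : X => x - y) @ x --> x - x.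
  apply: (@continuous_comp _ _ _ (fun y => (x, y)) (fun z : X * X => z.1 - z.2)).
    have := @cvg_pair _ _ _ (nbhs x) (nbhs x) (nbhs x) _ _ _ (fun _ => x) id (cvg_cst x) cvg_id.
    exact.
  exact: sub_continuous.
have h2 : (fun y : X => emb rho^-1 *: (x - y)) @ x --> emb rho^-1 *: (x - x).
  apply: (@continuous_comp _ _ _ (fun y => ((emb rho^-1 : K^o), x - y)) (fun z : K^o * X => z.1 *: z.2)).
    have := @cvg_pair _ _ _ (nbhs x) (nbhs (emb rho^-1 : K^o)) (nbhs (x - x)) _ _ _ (fun _ => (emb rho^-1 : K^o)) (fun y => x - y) (cvg_cst _) h1.
    exact.
  exact: scale_continuous.
rewrite subrr scaler0 in h2.
have nW := h2 _ U0.
have [y [Wy [k _ eky]]] : (interior [set y | U (emb rho^-1 *: (x - y))]) `&` range e !=set0.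
  apply: De; last exact: open_interior.
  by exists x.
have Uk : U (emb rho^-1 *: (x - e k)) by rewrite eky; exact: (nbhs_singleton Wy).
exists (maxn k.+1 (Num.truncn rho^-1)) => n; rewrite geq_max => /andP[kn tn].
move=> s t [ds Hs] [dt Ht] Hst.
have hrho : emb rho *: (emb rho^-1 *: (x - e k)) = x - e k.
  by rewrite scalerA -embM mulfV ?gt_eqF // emb1 scale1r.
have es : forall r : X -> K, dual r -> (forall A, U A -> `|r A| <= 1) -> nK (r (x - e k)) <= rho.
  move=> r dr Hr; rewrite -hrho dualZ // nKM nK_emb ger0_norm; last exact: ltW.
  rewrite -[leRHS]mulr1 ler_pM2l // -emb_le emb1 -normK; exact: Hr.
have ek : nK (s (e k) - t (e k)) < rho.
  apply: lt_trans (Hst k kn) _.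
  have hn : rho^-1 < n.+1%:R.
    apply: lt_le_trans (truncnS_gt _) _; rewrite ler_nat; exact: tn.
  by rewrite -[ltRHS]invrK ltf_pV2 // ?posrE ?invr_gt0 //.
have -> : s x - t x = (s (e k) - t (e k)) + (s (x - e k) - t (x - e k)).
  by rewrite !dualB //; ring.
apply: le_lt_trans (nKD _ _) _.
apply: le_lt_trans (lerD (lexx _) (nKD _ (- t (x - e k)))) _.
rewrite nKN.
have rE : eps = 3 * rho by rewrite /rho; field.
have := es s ds Hs; have := es t dt Ht; lra.
Qed.

Lemma inv_mono (m n : nat) : (m <= n)%N -> n.+1%:R^-1 <= m.+1%:R^-1 :> R.
Proof. by move=> mn; rewrite lef_pV2 ?posrE ?ltr0Sn // ler_nat. Qed.

Lemma inv_small (eps : R) : 0 < eps -> exists n : nat, n.+1%:R^-1 < eps.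
Proof.
move=> eps0; exists (Num.truncn eps^-1).
rewrite -[ltRHS]invrK ltf_pV2 ?posrE ?invr_gt0 ?ltr0Sn //.
exact: truncnS_gt.
Qed.

Lemma sum_seq_ge (As : seq X) (F : X -> R) A : (forall B, 0 <= F B) -> A \in As ->
  F A <= \sum_(B <- As) F B.
Proof.
move=> F0 AA; rewrite (big_rem A) //= lerDl; exact: sumr_ge0.
Qed.

Theorem main_generic
  (X_separable : exists D : set X, countable D /\ dense D)
  (U : set X) (U0 : nbhs 0 U)
  (J : Type) (le : J -> J -> Prop) (Jdir : directed_by le)
  (Us : J -> set (X -> K)) (Us_CU : forall j, CU U (Us j))
  (Hconv : exists F, CU U F /\ wH_lim le Us F) :
  Li le Us = Ls le Us /\ CU U (Li le Us) /\ wH_lim le Us (Li le Us).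
Proof.
move: Hconv => [F [FCU FH]].
have FF := ev_filter Jdir.
have : forall A, exists M, 0 <= M /\ forall s, polar U s -> nK (s A) <= M.
  by move=> A; have [M M0 HM] := polar_bound U0 A; exists M.
move=> /choice [Mf HMf].
pose Mb (As : seq X) (t : X -> K) := \sum_(A <- As) (Mf A + nK (t A)).
have Mb0 As t : 0 <= Mb As t.
  by apply: sumr_ge0 => A _; apply: addr_ge0; [exact: (HMf A).1|exact: nK_ge0].
have Mbb As t c A : polar U c -> A \in As -> nK (c A - t A) <= Mb As t.
  move=> pc AA; apply: le_trans (nKD _ _) _; rewrite nKN.
  apply: le_trans (@sum_seq_ge As (fun B => Mf B + nK (t B)) A _ AA); last first.
    by move=> B; apply: addr_ge0; [exact: (HMf B).1|exact: nK_ge0].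
  by apply: lerD => //; exact: (HMf A).2.
case: FCU => F0 Fconv Fcl Fpol.
have Fdual : F `<=` @dual _ X by move=> f /Fpol [].
have LsF : Ls le Us `<=` F.
  move=> t [I [leI [sub [s [Idir Hsub Hs [dt Hcv]]]]]].
  have FI := ev_filter Idir.
  have Hpt : forall B eps, 0 < eps -> eventually_in leI (fun i => nK (s i B - t B) < eps).
    move=> B eps eps0.
    move: Hcv => /(pointwise_cvgP _ _) => /(_ B).
    move=> /(_ [set y | `|t B - y| < emb eps]).
    have : nbhs (t B) [set y | `|t B - y| < emb eps].
      apply/nbhs_normP; exists (emb eps); first by rewrite /= -emb0 emb_lt.
      by move=> y /=.
    move=> h /(_ h) /= [i Hi]; exists i => j /Hi /=.
    by rewrite normK emb_lt nKB.
  apply: (@closedL F t (seq X * nat)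
     (fun p => [set f | F f /\ forall A, A \in p.1 -> nK (f A - t A) < p.2.+1%:R^-1])) => //.
  - by exists ([::], 0%N).
  - move=> [As1 n1] [As2 n2]; exists (As1 ++ As2, maxn n1 n2) => f /= [Ff Hf].
    split; split => // A AA; apply: lt_le_trans (Hf A _) (inv_mono _);
      rewrite ?mem_cat ?AA ?orbT ?leq_maxl ?leq_maxr //.
  - move=> [As n] /=.
    have e0 : 0 < n.+1%:R^-1 :> R by rewrite invr_gt0 ltr0Sn.
    have [eta eta0 [Bs HK]] := KLa As dt (Mb0 As t) e0.
    have [c Fc Hc] : exists2 c, F c & forall A, A \in As -> nK (c A - t A) < n.+1%:R^-1.
      apply: HK => //.
        by move=> c A Fc AA; apply: Mbb => //; apply: Fpol.
      move=> B BB.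
      have eta4 : 0 < emb (eta / 4) by rewrite -emb0 emb_lt divr_gt0.
      have [j0 Hj0] := FH B _ eta4.
      have [i0 Hi0] := Hsub j0.
      have eta2 : 0 < eta / 2 by rewrite divr_gt0.
      have [i [Hi1 Hi2]] := ev_ex Idir (filterI (Hpt B _ eta2) (ex_intro _ i0 Hi0)).
      have [hd1 _] := Hj0 _ Hi2.
      have [f Ff Hf] := hd1 (s i) (Hs i) (emb (eta / 2)) ltac:(rewrite emb_lt; lra).
      exists f => //.
      move: Hf => /=; rewrite normK emb_lt => Hf.
      have -> : f B - t B = (s i B - t B) - (s i B - f B) by ring.
      apply: le_lt_trans (nKD _ _) _; rewrite nKN; lra.
    by exists c.
  - by move=> p f [].
  - move=> x eps eps0; have [n hn] := inv_small eps0.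
    exists ([:: x], n) => f /= [_ Hf]; apply: lt_trans hn.
    by apply: Hf; rewrite mem_seq1.
have FLi : F `<=` Li le Us.
  move=> t Ft.
  have pt := Fpol _ Ft; have dt := pt.1.
  have [D [cD dD]] := X_separable.
  move/countable_injP: cD => [f finj].
  pose e n := if pselect (exists x, D x /\ f x = n) is left h then projT1 (cid h) else 0.
  have De : D `<=` range e.
    move=> x Dx; exists (f x) => //; rewrite /e; case: pselect => [h|]; last first.
      by move=> hn; exfalso; apply: hn; exists x.
    case: (cid h) => y [Dy fy] /=; apply: finj => //; exact: mem_set.
  have dre : dense (range e).
    move=> O O0 oO; have [x [Ox Dx]] := dD O O0 oO; exists x; split => //; exact: De.
  pose closeN n (s : X -> K) := forall k, (k < n)%N -> nK (s (e k) - t (e k)) < n.+1%:R^-1.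
  have closeN_mono m n s : (m <= n)%N -> closeN n s -> closeN m s.
    by move=> mn h k km; apply: lt_le_trans (h k (leq_trans km mn)) (inv_mono mn).
  pose P j n := exists2 s, Us j s & closeN n s.
  have ClaimP n : eventually_in le (fun j => P j n).
    pose As := [seq e k | k <- iota 0 n].
    have e0 : 0 < n.+1%:R^-1 :> R by rewrite invr_gt0 ltr0Sn.
    have [eta eta0 [Bs HK]] := KLa As dt (Mb0 As t) e0.
    have eta2 : 0 < emb (eta / 2) by rewrite -emb0 emb_lt divr_gt0.
    have : eventually_in le (fun j => forall B, B \in Bs -> exists2 s, Us j s & nK (s B - t B) < eta).
      apply: (@ev_all _ _ _ (fun B j => exists2 s, Us j s & nK (s B - t B) < eta)) => // B BB.
      have [j0 Hj0] := FH B _ eta2.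
      exists j0 => j /Hj0 [_ hd2].
      have [s Us_s Hs] := hd2 t Ft (emb eta) ltac:(rewrite emb_lt; lra).
      by exists s => //; move: Hs => /=; rewrite normK emb_lt.
    apply: filterS => j Hj.
    case: (Us_CU j) => U0' Uconv Ucl Upol.
    have [c Uc Hc] := HK (Us j) U0' Uconv (fun s h => (Upol s h).1)
      (fun c A Uc AA => Mbb As t c A (Upol c Uc) AA) Hj.
    exists c => // k kn; apply: Hc; apply: map_f; rewrite mem_iota add0n; exact: kn.
  have Hsel : forall j, exists s, Us j s /\ forall n, P j n -> closeN n s.
    move=> j; case: (Us_CU j) => [[s0 Us0] Uconv Ucl Upol].
    have P0 : P j 0%N by exists s0.
    have Pmono m n : (m <= n)%N -> P j n -> P j m.
      by move=> mn [s Uss Hs]; exists s => //; apply: closeN_mono mn Hs.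
    case: (pselect (forall n, P j n)) => [Pall|Pnot].
    - exists t; split; last by move=> n _ k kn; rewrite subrr nK0 invr_gt0 ltr0Sn.
      apply: (@closedL (Us j) t nat (fun n => [set s | Us j s /\ closeN n s])) => //.
      + by exists 0%N.
      + move=> m n; exists (maxn m n) => s [Uss Hs]; split; split => //;
          apply: closeN_mono Hs; rewrite ?leq_maxl ?leq_maxr //.
      + by move=> n; have [s Uss Hs] := Pall n; exists s.
      + by move=> n s [].
      + move=> x eps eps0; have [N HN] := equi U0 dre x eps0.
        exists N => s [Uss Hs]; exact: (HN N (leqnn N) s t (Upol s Uss) pt Hs).
    - have [m [Pm Pm1]] : exists m, P j m /\ ~ P j m.+1.
        apply: contrapT => hno; apply: Pnot.
        elim => // n IH; apply: contrapT => Pn1; apply: hno; exists n; split => //.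
      have [s Uss Hs] := Pm.
      exists s; split => // n Pn; apply: closeN_mono Hs.
      rewrite leqNgt; apply/negP => mn; apply: Pm1; exact: Pmono mn Pn.
  move/choice: Hsel => [sf Hsf].
  exists sf; split.
    by have [[j0 _] _ _ _] := Jdir; exists j0 => j _; exact: (Hsf j).1.
  split => //.
  apply/(pointwise_cvgP _ _) => x Q /nbhs_normP [r r0 Hr].
  have [r' er'] := pos_emb r0.
  have r'0 : 0 < r' by rewrite -emb_lt -er' emb0.
  have [N HN] := equi U0 dre x r'0.
  have := ClaimP N; apply: filterS => j /(Hsf j).2 Hc.
  apply: Hr => /=; rewrite normK er' emb_lt nKB.
  case: (Us_CU j) => _ _ _ Upol.
  exact: (HN N (leqnn N) _ t (Upol _ (Hsf j).1) pt Hc).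
have LiLs : Li le Us `<=` Ls le Us.
  move=> t [s [[j0 Hj0] [dt Hcv]]].
  have : forall j, exists r, Us j r by move=> j; case: (Us_CU j) => -[r ?] *; exists r.
  move/choice => [pk Hpk].
  pose s' j := if pselect (Us j (s j)) is left _ then s j else pk j.
  exists J, le, id, s'; split => //.
  - by move=> j1; exists j1.
  - by move=> j; rewrite /s'; case: pselect.
  - split => //; apply/(pointwise_cvgP _ _) => x Q HQ.
    move: Hcv => /(pointwise_cvgP _ _) /(_ x Q HQ) /= hx.
    have hj : eventually_in le (fun j => Us j (s j)) by exists j0.
    change (eventually_in le (fun j => Q (s j x))) in hx.
    change (eventually_in le (fun j => Q (s' j x))).
    apply: filterS2 hx hj => j h1 h2.
    by rewrite /s'; case: pselect.
have LiF : Li le Us = F.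
  by apply/seteqP; split; [move=> t /LiLs /LsF | exact: FLi].
have LsF' : Ls le Us = F.
  by apply/seteqP; split; [exact: LsF | move=> t /FLi /LiLs].
by rewrite LiF LsF'; split => //; split => //; split.
Qed.
End Core.

Lemma netR (R : realType) (d : R) : 0 < d ->
  exists G : seq R, forall z, `|z| <= 1 -> exists2 g, g \in G & `|z - g| < d.
Proof.
move=> d0.
set N := Num.truncn d^-1.
set h : R := N.+1%:R^-1.
have h0 : 0 < h by rewrite invr_gt0 ltr0Sn.
have hd : h < d.
  rewrite /h -[ltRHS]invrK ltf_pV2 ?posrE ?invr_gt0 ?ltr0Sn //; exact: truncnS_gt.
have hN : h * N.+1%:R = 1 by rewrite /h mulVf // pnatr_eq0.
exists [seq (i%:R * h - 1) | i <- iota 0 (2 * N.+1).+1] => z.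
rewrite ler_norml => /andP[z1 z2].
set w := (z + 1) * N.+1%:R.
have w0 : 0 <= w by rewrite mulr_ge0 // ?ler0n //; lra.
have /andP[wi1 wi2] := truncn_itv w0.
set i := Num.truncn w in wi1 wi2.
have hw : (z + 1) = w * h by rewrite /w -mulrA [N.+1%:R * h]mulrC hN mulr1.
exists (i%:R * h - 1).
  have hi : i%:R <= 2 * N.+1%:R :> R.
    apply: le_trans wi1 _; rewrite /w; apply: ler_wpM2r; [exact: ler0n| lra].
  apply: (map_f (fun i : nat => i%:R * h - 1)).
  by rewrite mem_iota leq0n add0n /= ltnS -(ler_nat R) natrM.
have e1 : z - (i%:R * h - 1) = (w - i%:R) * h by rewrite mulrBl -hw; ring.
rewrite e1 ger0_norm; last by apply: mulr_ge0; [rewrite subr_ge0 | exact: ltW].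
apply: le_lt_trans hd; rewrite -[leRHS]mul1r ler_pM2r //; lra.
Qed.
Section CI.
Variable R : realType.
Local Open Scope complex_scope.
Local Notation ReC := (@complex.Re R).
Local Notation ImC := (@complex.Im R).
Definition nC (z : R[i]) : R := Num.sqrt (ReC z ^+ 2 + ImC z ^+ 2).
Lemma C_embD (a b : R) : (a + b)%:C = a%:C + b%:C :> R[i].
Proof. exact: rmorphD. Qed.
Lemma C_embM (a b : R) : (a * b)%:C = a%:C * b%:C :> R[i].
Proof. exact: rmorphM. Qed.
Lemma C_emb1 : (1 : R)%:C = 1 :> R[i].
Proof. exact: rmorph1. Qed.
Lemma C_emb_le (a b : R) : (a%:C <= b%:C :> R[i]) = (a <= b).
Proof. exact: lecR. Qed.
Lemma C_emb_lt (a b : R) : (a%:C < b%:C :> R[i]) = (a < b).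
Proof. exact: ltcR. Qed.
Lemma C_normK (z : R[i]) : `|z| = (nC z)%:C.
Proof. exact: normc_def. Qed.
Lemma C_pos (e : R[i]) : 0 < e -> exists r, e = r%:C.
Proof. by move=> e0; exists (ReC e); rewrite RRe_real // gtr0_real. Qed.
Lemma C_reD (x y : R[i]) : ReC (x + y) = ReC x + ReC y.
Proof. by case: x => a b; case: y => c d. Qed.
Lemma C_nC_ge0 z : 0 <= ReC z ^+ 2 + ImC z ^+ 2.
Proof. by rewrite addr_ge0 // sqr_ge0. Qed.
Lemma C_re_le (z : R[i]) : ReC z <= nC z.
Proof.
rewrite /nC; apply: le_trans (ler_norm _) _; rewrite -sqrtr_sqr.
by apply: ler_wsqrtr; rewrite lerDl sqr_ge0.
Qed.
Lemma C_cj (z : R[i]) : nC (z^*) = nC z.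
Proof. by case: z => a b; rewrite /nC /= sqrrN. Qed.
Lemma C_sqrD (x y : R[i]) :
  nC (x + y) ^+ 2 = nC x ^+ 2 + 2 * ReC (x^* * y) + nC y ^+ 2.
Proof.
rewrite /nC !sqr_sqrtr ?C_nC_ge0 //.
case: x => a b; case: y => c d /=.
ring.
Qed.
Lemma C_re_emb (l : R) (x y : R[i]) : ReC (x^* * (l%:C * y)) = l * ReC (x^* * y).
Proof. case: x => a b; case: y => c d /=. ring. Qed.
Lemma C_re_sq (x : R[i]) : ReC (x^* * x) = nC x ^+ 2.
Proof. rewrite /nC sqr_sqrtr ?C_nC_ge0 //; case: x => a b /=; ring. Qed.
End CI.
Section CN.
Variable R : realType.
Local Open Scope complex_scope.
Local Notation ReC := (@complex.Re R).
Local Notation ImC := (@complex.Im R).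
Lemma sqrt_sum_le (u v : R) : Num.sqrt (u ^+ 2 + v ^+ 2) <= `|u| + `|v|.
Proof.
have h : `|u| + `|v| = Num.sqrt ((`|u| + `|v|) ^+ 2).
  by rewrite sqrtr_sqr (ger0_norm (addr_ge0 (normr_ge0 u) (normr_ge0 v))).
rewrite h; apply: ler_wsqrtr.
have := real_normK (num_real u); have := real_normK (num_real v).
have := normr_ge0 u; have := normr_ge0 v; nra.
Qed.
Lemma netC (d : R) : 0 < d -> exists G : seq R[i], forall z, nC z <= 1 ->
  exists2 g, g \in G & nC (z - g) < d.
Proof.
move=> d0; have d2 : 0 < d / 2 by rewrite divr_gt0.
have [G HG] := netR d2.
exists [seq (a +i* b) | a <- G, b <- G] => -[a b].
rewrite /nC /= -sqrtr1 ler_sqrt // => hab.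
have ha : `|a| <= 1.
  have := real_normK (num_real a); have := normr_ge0 a; have := sqr_ge0 b; nra.
have hb : `|b| <= 1.
  have := real_normK (num_real b); have := normr_ge0 b; have := sqr_ge0 a; nra.
have [g1 g1G h1] := HG a ha; have [g2 g2G h2] := HG b hb.
exists (g1 +i* g2); first by apply/allpairsP; exists (g1, g2).
rewrite /nC /=; apply: le_lt_trans (sqrt_sum_le _ _) _; lra.
Qed.
End CN.

Section RI.
Variable R : realType.
Lemma R_pos (e : R) : 0 < e -> exists r, e = r.
Proof. by move=> _; exists e. Qed.
Lemma R_re_le (z : R) : z <= `|z|.
Proof. exact: ler_norm. Qed.
Lemma R_sqrD (x y : R) : `|x + y| ^+ 2 = `|x| ^+ 2 + 2 * (x * y) + `|y| ^+ 2.
Proof. rewrite !real_normK ?num_real //; ring. Qed.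
Lemma R_re_emb (l x y : R) : x * (l * y) = l * (x * y).
Proof. ring. Qed.
Lemma R_re_sq (x : R) : x * x = `|x| ^+ 2.
Proof. by rewrite real_normK ?num_real // expr2. Qed.
End RI.

Unset Implicit Arguments.

Theorem corollary3p18 (R : realType) (K : numFieldType)
  (HK : K = (R : numFieldType) \/ K = (R[i] : numFieldType))
  (X : topologicalLmodType K)
  (X_hausdorff : hausdorff_space X)
  (X_separable : exists D : set X, countable D /\ dense D)
  (dual_sep : forall x y : X, x <> y -> exists s, dual s /\ s x <> s y)
  (U : set X) (U0 : nbhs 0 U)
  (J : Type) (le : J -> J -> Prop) (Jdir : directed_by le)
  (Us : J -> set (X -> K)) (Us_CU : forall j, CU U (Us j))
  (Hconv : exists F, CU U F /\ wH_lim le Us F) :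
  Li le Us = Ls le Us /\ CU U (Li le Us) /\ wH_lim le Us (Li le Us).
Proof.
case: HK => HK; subst K.
- exact: (@main_generic R _ id (fun _ _ => erefl) (fun _ _ => erefl) erefl
    (fun _ _ => erefl) (fun _ _ => erefl) Num.norm (fun _ => erefl) (@R_pos R)
    id id (fun _ _ => erefl) (@R_re_le R) (fun _ => erefl) (@R_sqrD R)
    (@R_re_emb R) (@R_re_sq R) (@netR R) X X_separable U U0 J le Jdir Us Us_CU Hconv).
- exact: (@main_generic R _ (fun r : R => (r%:C)%C) (@C_embD R) (@C_embM R) (@C_emb1 R)
    (@C_emb_le R) (@C_emb_lt R) (@nC R) (@C_normK R) (@C_pos R)
    (@complex.Re R) (@conjc R) (@C_reD R) (@C_re_le R) (@C_cj R) (@C_sqrD R)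
    (@C_re_emb R) (@C_re_sq R) (@netC R) X X_separable U U0 J le Jdir Us Us_CU Hconv).
Qed.
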